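(* Let $n,d\ge 1$, let $\mathbb{D}^n=\{0,1,\dots,d-1\}^n$, and let $W$ be the complex Hilbert space of dimension $d^n$ with orthonormal (standard) basis $\{v_x\}_{x\in\mathbb{D}^n}$. Let $F:\mathbb{D}^n\to\mathbb{R}$ be an objective function and let $H_P$ be the problem Hamiltonian representing $F$, i.e. the linear operator with $H_P(v_x)=F(x)v_x$ for all $x\in\mathbb{D}^n$. Let $K$ be a group acting linearly and unitarily on $W$ such that every element of $K$ commutes with $H_P$ (i.e. $K$ is a group of symmetries of $H_P$, not necessarily all of them), and let $$W=\bigoplus_i W_i,\qquad W_i=V_i^{\oplus m_i},$$ be the decomposition of $W$ into isotypic components, where $V_i$ ranges over the pairwise non-isomorphic irreducible representations of $K$ occurring in $W$ and $m_i$ is the multiplicity of $V_i$. Fix an index $i$ and suppose $H_{M,i}$ is a Hamiltonian on $W$ such that (1) the matrix of $H_{M,i}$ in the standard basis satisfies the hypotheses of the Perron–Frobenius theorem (it is a real matrix with nonnegative entries that is irreducible, i.e. it leaves no proper nonzero coordinate subspace invariant); (2) the lowest-energy eigenspace of $H_{M,i}$ is one-dimensional and contained in $W_i$; and (3) $H_{M,i}$ preserves the decomposition $W=\bigoplus_j W_j$, i.e. $H_{M,i}(W_j)\subseteq W_j$ for all $j$. Let $\xi_i$ be a unit vector spanning the lowest-energy eigenspace of $H_{M,i}$. Then one obtains a reduced QAOA with problem Hamiltonian $H_P$, mixer Hamiltonian $H_{M,i}$ and initial state $\xi_i$ whose ambient Hilbert space is $W_i$: for every $p\ge 1$ and all real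 parameters $\beta_1,\gamma_1,\dots,\beta_p,\gamma_p$, the state $$e^{-i\beta_1 H_{M,i}}e^{-i\gamma_1 H_P}\cdots e^{-i\beta_p H_{M,i}}e^{-i\gamma_p H_P}\,\xi_i$$ lies in $W_i$.
   Context: QAOA (Quantum Approximate Optimization Algorithm) of depth $p$ with problem Hamiltonian $H_P$, mixer Hamiltonian $H_M$ and initial state $\xi$ (a lowest-energy state of $H_M$) prepares the state $e^{-i\beta_1 H_M}e^{-i\gamma_1 H_P}\cdots e^{-i\beta_p H_M}e^{-i\gamma_p H_P}\xi$ for real parameters $\beta_j,\gamma_j$, and then measures in the standard basis. *)

(* Defs.v *)
From HB Require Import structures.
From mathcomp Require Import all_boot all_order all_algebra.
From mathcomp Require Import complex.
From mathcomp Require Import all_classical all_reals all_analysis.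
Import Order.TTheory GRing.Theory Num.Theory.
Import numFieldNormedType.Exports.

Set Implicit Arguments.
Unset Strict Implicit.
Unset Printing Implicit Defensive.

Local Open Scope ring_scope.
Local Open Scope complex_scope.

(* A linear operator on W is a square matrix A
     acting on the RIGHT: v |-> v *m A.
   - A subspace of W is represented (as in mxalgebra) by a square matrix
     whose row space is the subspace; "v \in U" is (v <= U)%MS. *)

Section QAOA.
Variable R : realType.
Local Notation C := R[i].

Definition Dn (n d : nat) := {ffun 'I_n -> 'I_d}.
(* dimension of W: #|Dn n d| = d ^ n *)
Definition dimW (n d : nat) := #|Dn n d|.

(* H_P(v_x) = F(x) v_x, where the basis vector of index k : 'I_(dimW n d)
   is v_(enum_val k). *)
Definition HP (n d : nat) (F : Dn n d -> R) : 'M[C]_(dimW n d) :=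
  diag_mx (\row_(k < dimW n d) (F (enum_val k))%:C).

Section Ops.
Variable N : nat.

Definition adjmx m p (A : 'M[C]_(m, p)) : 'M[C]_(p, m) := (map_mx conjc A)^T.
Definition hermitian_mx (A : 'M[C]_N) := adjmx A = A.
Definition unitarymx (A : 'M[C]_N) := A *m adjmx A = 1%:M.
Definition vnorm2 (v : 'rV[C]_N) : C := (v *m adjmx v) 0 0.

Definition mxpow (A : 'M[C]_N) (k : nat) : 'M[C]_N := iter k (mulmx A) 1%:M.
Definition expm (A : 'M[C]_N) : 'M[C]_N :=
  limn (series (fun k => (k`!%:R)^-1 *: mxpow A k)).

Definition evol (t : R) (H : 'M[C]_N) : 'M[C]_N := expm ((- 'i * t%:C) *: H).

(* QAOA state  e^{-i b1 HM} e^{-i g1 HP} ... e^{-i bp HM} e^{-i gp HP} xi,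
   for the list of parameters [:: (b1, g1); ...; (bp, gp)]
   (operators act on the right on row vectors, so the rightmost factor,
   e^{-i gp HP}, is applied first). *)
Definition qaoa_state (Hp Hm : 'M[C]_N) (xi : 'rV[C]_N) (bg : seq (R * R)) :=
  foldr (fun bgj v => v *m evol bgj.2 Hp *m evol bgj.1 Hm) xi bg.

(* --- Groups of unitary operators (a group acting linearly and unitarily on
   W, identified with its image in U(W)) --- *)
Definition unitary_group (K : 'M[C]_N -> Prop) :=
  [/\ K 1%:M,
      (forall g h, K g -> K h -> K (g *m h)),
      (forall g, K g -> K (invmx g)) &
      (forall g, K g -> unitarymx g)].

Definition submod (K : 'M[C]_N -> Prop) (U : 'M[C]_N) :=
  forall g, K g -> (U *m g <= U)%MS.

Definition irr_submod (K : 'M[C]_N -> Prop) (U : 'M[C]_N) :=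
  [/\ submod K U, U != 0 &
      forall V : 'M[C]_N, submod K V -> (V <= U)%MS -> V = 0 \/ (U <= V)%MS].

(* isomorphism of subrepresentations: a linear map f, injective on U,
   mapping U onto V and commuting with the action of K on U *)
Definition submod_iso (K : 'M[C]_N -> Prop) (U V : 'M[C]_N) :=
  exists f : 'M[C]_N,
    [/\ (U *m f == V)%MS, \rank (U *m f) = \rank U &
        forall g, K g -> U *m g *m f = U *m f *m g].

(* The isotypic component of W of type V (V an irreducible subrepresentation):
   the sum of all irreducible subrepresentations isomorphic to V.
   v lies in it iff v lies in a finite sum of such subrepresentations. *)
Definition in_isotypic (K : 'M[C]_N -> Prop) (V : 'M[C]_N) (v : 'rV[C]_N) :=
  exists (k : nat) (Us : 'I_k -> 'M[C]_N),
    (forall j, irr_submod K (Us j) /\ submod_iso K (Us j) V) /\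
    (v <= \sum_(j < k) Us j)%MS.

Definition coord_subspace (A : {set 'I_N}) : 'M[C]_N :=
  \matrix_(i, j) (if (i == j) && (i \in A) then 1 else 0).

Definition perron_frobenius_hyp (H : 'M[C]_N) :=
  (forall i j, 0 <= H i j) /\
  (forall A : {set 'I_N}, (0 < #|A|)%N -> (#|A| < N)%N ->
     ~ (coord_subspace A *m H <= coord_subspace A)%MS).

Definition lowest_eigenvalue (H : 'M[C]_N) (e : C) :=
  eigenvalue H e /\ forall mu, eigenvalue H mu -> e <= mu.

End Ops.
End QAOA.

(* Main.v *)
Require Import Defs.
From HB Require Import structures.
From mathcomp Require Import all_boot all_order all_algebra.
From mathcomp Require Import complex.
From mathcomp Require Import all_classical all_reals all_analysis.
Import Order.TTheory GRing.Theory Num.Theory.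
Import numFieldNormedType.Exports.
Local Open Scope ring_scope.
Local Open Scope complex_scope.
Local Open Scope classical_set_scope.

Section Work.
Variable R : realType.
Variable N : nat.
Local Notation MM := 'M[R[i]]_N.
Definition MT : normedModType R[i] := 'M[R[i]]_N.
Definition CT : numFieldType := R[i].

Lemma expm_cases (A : MM) : expm A = 0 \/
  series (fun k => (k`!%:R)^-1 *: mxpow A k) @ \oo --> (expm A : MT).
Proof. rewrite /expm /lim /lim_in /xget. case: pselect => [[l Hl]|].
 right. case: sigW => /= x /asboolP. done.
 left. apply/matrixP => i j. rewrite !mxE. reflexivity. Qed.

Lemma cvg_sumr (I : Type) (r : seq I) (f : I -> nat -> CT) (l : I -> CT) :
  (forall i, f i n @[n --> \oo] --> l i) ->
  (\sum_(i <- r) f i n) @[n --> \oo] --> \sum_(i <- r) l i.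
Proof.
move=> H; elim: r => [|a r IH].
  rewrite big_nil.
  have E : (fun n => \sum_(i <- [::]) f i n) = (fun=> (0:CT)).
    by apply/funext => n; rewrite big_nil.
  rewrite E.
  apply: (@cvg_cst CT).
rewrite big_cons. have E : (fun n => \sum_(i <- a :: r) f i n) =
   (fun n => f a n + \sum_(i <- r) f i n).
  by apply/funext => n; rewrite big_cons.
rewrite E.
apply: (@cvgD CT CT).
exact: H. exact: IH.
Qed.
Lemma lim_sub (S : MM) (u : nat -> MT) (L : MT) : u @ \oo --> L ->
  (forall n, (S *m u n <= S)%MS) -> (S *m L <= S)%MS.
Proof.
move=> Hu Hn. rewrite submxE. set Y := cokermx S.
have E : forall (X : MM) r s, (S *m X *m Y) r s =
   \sum_b (\sum_a S r a * X a b) * Y b s.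
  by move=> X r s; rewrite !mxE; apply: eq_bigr => b _; rewrite !mxE.
apply/eqP/matrixP => r s.
have coord : forall a b, (fun n => (u n a b : CT)) @ \oo --> (L a b : CT).
  move=> a b.
  have := continuous_cvg _ (@coord_continuous CT _ _ a b L) Hu. exact.
have ent : (fun n => ((S *m u n *m Y) r s : CT)) @ \oo --> ((S *m L *m Y) r s : CT).
  rewrite E. have -> : (fun n => ((S *m u n *m Y) r s : CT)) =
     (fun n => \sum_b (\sum_a S r a * u n a b) * Y b s).
    by apply/funext => n; exact: E.
  apply: cvg_sumr => b. apply: (@cvgMl CT). apply: cvg_sumr => a. apply: (@cvgMr CT).
  exact: coord.
have h0 : (fun n => ((S *m u n *m Y) r s : CT)) = (fun=> (0:CT)).
  apply/funext => n; have := Hn n; rewrite submxE => /eqP H0; by rewrite /Y H0 mxE.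
rewrite h0 in ent. rewrite [in RHS]mxE.
apply/esym. exact: (cvg_unique (@norm_hausdorff _ CT) (cvg_cst (0:CT)) ent).
Qed.

Variable K : MM -> Prop.

Lemma schur (U V A : MM) : irr_submod K U -> submod_iso K U V ->
  (forall g, K g -> g *m A = A *m g) ->
  U *m A = 0 \/ (irr_submod K (U *m A) /\ submod_iso K (U *m A) V).
Proof.
case=> sU nzU irrU [f0 [Uf0 rkf0 comf0]] comA.
set Kr := (U :&: kermx A)%MS.
have sKr : submod K Kr.
  move=> g Kg. rewrite sub_capmx; apply/andP; split.
    by apply: submx_trans (sU g Kg); apply: submxMr; apply: capmxSl.
  rewrite sub_kermx -mulmxA comA // mulmxA.
  have /sub_kermxP -> : (Kr <= kermx A)%MS by apply: capmxSr.
  by rewrite mul0mx.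
case: (irrU Kr sKr (capmxSl _ _)) => [Kr0 | UKr]; last first.
  by left; apply/sub_kermxP; exact: submx_trans UKr (capmxSr _ _).
right.
have rkUA : \rank (U *m A) = \rank U.
  by rewrite -(mxrank_mul_ker U A) -/Kr Kr0 mxrank0 addn0.
have key : forall X : MM, (X <= U)%MS -> X *m A = 0 -> X = 0.
  move=> X XU XA. have : (X <= Kr)%MS.
    by rewrite sub_capmx XU /=; apply/sub_kermxP.
  by rewrite Kr0 submx0 => /eqP.
set g := pinvmx (U *m A) *m U.
have keyg : forall X : MM, (X <= U)%MS -> X *m A *m g = X.
  move=> X XU. apply/eqP; rewrite -subr_eq0; apply/eqP; apply: key.
    apply: addmx_sub; first by rewrite /g mulmxA; exact: submxMl.
    by rewrite eqmx_opp.
  rewrite mulmxBl.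
  have -> : X *m A *m g *m A = X *m A *m pinvmx (U *m A) *m (U *m A).
    by rewrite /g !mulmxA.
  by rewrite mulmxKpV ?subrr // submxMr.
clearbody g.
split.
  split.
  - move=> h Kh. rewrite -mulmxA -comA // mulmxA. exact: submxMr (sU h Kh).
  - apply/eqP => UA0; move/eqP: nzU; apply.
    by apply/eqP; rewrite -mxrank_eq0 -rkUA UA0 mxrank0.
  - move=> V' sV' V'UA.
    set P := (U :&: kermx (A *m cokermx V'))%MS.
    have sP : submod K P.
      move=> h Kh; rewrite sub_capmx; apply/andP; split.
        apply: submx_trans (sU h Kh); apply: submxMr; exact: capmxSl.
      rewrite sub_kermx (mulmxA (P *m h)) -submxE -(mulmxA P) comA // mulmxA.
      apply: submx_trans (sV' h Kh). apply: submxMr.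
      rewrite submxE -mulmxA; apply/eqP/sub_kermxP; exact: capmxSr.
    case: (irrU P sP (capmxSl _ _)) => [P0|UP]; last first.
      right. rewrite submxE -mulmxA. apply/eqP/sub_kermxP.
      exact: submx_trans UP (capmxSr _ _).
    left. case/submxP: V'UA => D defV.
    have : (D *m U <= P)%MS.
      rewrite sub_capmx submxMl /=. apply/sub_kermxP.
      by rewrite mulmxA -(mulmxA D) -defV mulmx_coker.
    rewrite P0 submx0 => /eqP DU0. by rewrite defV mulmxA DU0 mul0mx.
exists (g *m f0). split.
- by rewrite mulmxA keyg.
- by rewrite mulmxA keyg // rkf0 rkUA.
- move=> h Kh. rewrite -(mulmxA U A h) -comA // mulmxA.
  by rewrite !mulmxA (keyg (U *m h)) ?(sU h Kh) // keyg // comf0.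
Qed.

Variable Vi : MM.
Definition famOK {k} (Us : 'I_k -> MM) :=
  forall j, irr_submod K (Us j) /\ submod_iso K (Us j) Vi.

Lemma exists_S : exists S : MM,
  (forall k (Us : 'I_k -> MM), famOK Us -> (\sum_(j < k) Us j <= S)%MS) /\
  exists k (Us : 'I_k -> MM), famOK Us /\ S = (\sum_(j < k) Us j)%MS.
Proof.
pose P r := `[< exists k (Us : 'I_k -> MM), famOK Us /\
                 \rank (\sum_(j < k) Us j)%MS = r >].
have P0 : exists r, P r.
  exists 0%N; apply/asboolP; exists 0%N, (fun=> 0); split; first by case.
  by rewrite big_ord0 mxrank0.
have Pub : forall r, P r -> (r <= N)%N.
  by move=> r /asboolP [k [Us [_ <-]]]; exact: rank_leq_col.
case: (ex_maxnP P0 Pub) => r /asboolP [k [Us [okUs rkS]]] maxr.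
exists (\sum_(j < k) Us j)%MS; split; last by exists k, Us.
move=> k' Us' ok'.
pose Vs (j : 'I_(k + k')) := match fintype.split j with inl a => Us a | inr b => Us' b end.
have okV : famOK Vs by move=> j; rewrite /Vs; case: fintype.split => a; [exact: okUs | exact: ok'].
set S := (\sum_(j < k) Us j)%MS. set T := (\sum_(j < k + k') Vs j)%MS.
have ST : (S <= T)%MS.
  apply/sumsmx_subP => i _. apply: (sumsmx_sup (lshift k' i)) => //.
  have E : fintype.split (lshift k' i) = inl i := unsplitK (inl i).
  by rewrite /Vs E.
have S'T : (\sum_(j < k') Us' j <= T)%MS.
  apply/sumsmx_subP => i _. apply: (sumsmx_sup (rshift k i)) => //.
  have E : fintype.split (rshift k i) = inr i := unsplitK (inr i).
  by rewrite /Vs E.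
have rkT : (\rank T <= r)%N.
  by apply: maxr; apply/asboolP; exists (k + k')%N, Vs.
have TS : (T <= S)%MS.
  case: (mxrank_leqif_sup ST) => _ <-.
  by apply/eqP/anti_leq; rewrite mxrankS // rkS rkT.
exact: submx_trans S'T TS.
Qed.

Lemma sub_mxpow (S A : MM) k : (S *m A <= S)%MS -> (S *m mxpow A k <= S)%MS.
Proof.
move=> SA; elim: k => [|k IH]; first by rewrite /mxpow /= mulmx1.
rewrite /mxpow /= mulmxA. exact: submx_trans (submxMr _ SA) IH.
Qed.

Lemma sub_expm (S A : MM) : (S *m A <= S)%MS -> (S *m expm A <= S)%MS.
Proof.
move=> SA. case: (expm_cases A) => [->|cv]; first by rewrite mulmx0 sub0mx.
have H := @lim_sub S _ _ cv. apply: H => n. rewrite seriesEord /= mulmx_sumr.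
apply: summx_sub => k _. rewrite -scalemxAr. apply: scalemx_sub.
exact: sub_mxpow.
Qed.

Lemma sub_evol (S A : MM) t : (S *m A <= S)%MS -> (S *m evol t A <= S)%MS.
Proof.
move=> SA; apply: sub_expm. rewrite -scalemxAr. exact: scalemx_sub.
Qed.

End Work.

Theorem mainTheorem1 (R : realType) (n d : nat) (hn : (1 <= n)%N) (hd : (1 <= d)%N)
  (F : Dn n d -> R)
  (K : 'M[R[i]]_(dimW n d) -> Prop)
  (HK : unitary_group K)
  (HKcomm : forall g, K g -> g *m HP F = HP F *m g)
  (Vi : 'M[R[i]]_(dimW n d)) (HVi : irr_submod K Vi)
  (HM : 'M[R[i]]_(dimW n d))
  (HMherm : hermitian_mx HM)
  (HM1 : perron_frobenius_hyp HM)
  (e : R[i]) (He : lowest_eigenvalue HM e)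
  (HM2dim : \rank (eigenspace HM e) = 1%N)
  (HM2sub : forall v : 'rV[R[i]]_(dimW n d),
      (v <= eigenspace HM e)%MS -> in_isotypic K Vi v)
  (HM3 : forall Vj : 'M[R[i]]_(dimW n d), irr_submod K Vj ->
      forall w, in_isotypic K Vj w -> in_isotypic K Vj (w *m HM))
  (xi : 'rV[R[i]]_(dimW n d))
  (Hxi : (xi <= eigenspace HM e)%MS) (Hxi1 : vnorm2 xi = 1) :
  forall (p : nat), (1 <= p)%N ->
  forall beta gamma : 'I_p -> R,
    in_isotypic K Vi
      (qaoa_state (HP F) HM xi [seq (beta j, gamma j) | j <- enum 'I_p]).
Proof.
move=> p _ beta gamma.
have [S [hS [k [Us [okUs defS]]]]] := @exists_S R (dimW n d) K Vi.
have charS : forall v, in_isotypic K Vi v <-> (v <= S)%MS.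
  move=> v; split.
  - case=> k' [Us' [ok' sub]]. exact: submx_trans sub (hS _ _ ok').
  - move=> vS. exists k, Us; split; [exact: okUs | by rewrite -defS].
have SHM : (S *m HM <= S)%MS.
  apply/row_subP => i; rewrite row_mul. apply/charS. apply: (HM3 Vi HVi).
  apply/charS; exact: row_sub.
have SHP : (S *m HP F <= S)%MS.
  rewrite {1}defS sumsmxMr. apply/sumsmx_subP => j _.
  case: (@schur R _ K _ _ _ (okUs j).1 (okUs j).2 HKcomm) => [->|[irr iso]].
    exact: sub0mx.
  have := hS 1%N (fun=> Us j *m HP F) (fun=> conj irr iso).
  by rewrite big_ord1.
apply/charS. rewrite /qaoa_state.
elim: [seq _ | _ <- _] => /= [|[b g] l IH].
  by apply/charS/HM2sub.
apply: submx_trans (submxMr _ (submx_trans (submxMr _ IH) (@sub_evol R _ _ _ _ SHP))) (@sub_evol R _ _ _ _ SHM).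
Qed.
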